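(* Under direct parameterization $\pi_\theta(a|s)=\theta_{s,a}$, and assuming each $\sigma(P_{s,a},\cdot)$ is differentiable, for all $s\in\mathcal S$, $a\in\mathcal A$, $$\frac{\partial\,\mathbb E_{s_0\sim\rho}V^{\pi_\theta}(s_0)}{\partial\theta_{s,a}}=\frac{1}{1-\gamma}\,d^{\pi_\theta,\hat P^{\pi_\theta}}(s)\,Q^{\pi_\theta}(s,a).$$
   Context: $\mathcal S$ and $\mathcal A$ are finite sets; $\Delta(\mathcal X)$ denotes the probability simplex over a finite set $\mathcal X$. $P=\{P_{s,a}\}$ with $P_{s,a}\in\Delta(\mathcal S)$ is the nominal transition kernel, $r:\mathcal S\times\mathcal A\to[0,1]$, $\gamma\in[0,1)$, $\rho\in\Delta(\mathcal S)$. A stationary policy is a map $\pi:\mathcal S\to\Delta(\mathcal A)$. A function $\sigma:\mathbb R^{\mathcal S}\to\mathbb R$ is a convex risk measure if (i) $V'\le V$ pointwise implies $\sigma(V)\le\sigma(V')$; (ii) $\sigma(V+m)=\sigma(V)-m$ for every constant $m$; (iii) $\sigma$ is convex. For each $(s,a)$ a convex risk measure $\sigma(P_{s,a},\cdot)$ is given, with penalty $D(\hat\mu,P_{s,a}):=\sup_{V}\big(-\sigma(P_{s,a},V)-\mathbb E_{s'\sim\hat\mu}V(s')\big)$. For a policy $\pi$, $V^\pi$ is the unique solution of $V^\pi(s)=\sum_a\pi(a|s)(r(s,a)-\gamma\sigma(P_{s,a},V^\pi))$, $Q^\pi(s,a):=r(s,a)-\gamma\sigma(P_{s,a},V^\pi)$,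 $\hat P^\pi_{s,a}\in\arg\min_{\hat\mu\in\Delta(\mathcal S)}\big(D(\hat\mu,P_{s,a})+\mathbb E_{s'\sim\hat\mu}V^\pi(s')\big)$. For a policy $\pi$ and stationary kernel $K$, $d^{\pi,K}(s):=(1-\gamma)\sum_{t\ge0}\gamma^t\Pr(s_t=s)$ with $s_0\sim\rho$, $a_t\sim\pi(\cdot|s_t)$, $s_{t+1}\sim K_{s_t,a_t}$. The partial derivative is taken treating $V^{\pi_\theta}$ as a function of the vector $(\theta_{s,a})$ in a neighbourhood of its value. *)

(* Defs.v *)
(* MathComp + MathComp-Analysis, R : realType.
   States S = 'I_n, actions A = 'I_m; functions on S are row vectors 'rV[R]_n
   (V 0 s is V(s)); a policy / parameter theta is an n x m matrix. *)
From HB Require Import structures.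
From mathcomp Require Import all_boot all_order all_algebra.
From mathcomp Require Import all_classical all_reals all_analysis.
Set Implicit Arguments. Unset Strict Implicit. Unset Printing Implicit Defensive.
Import Order.TTheory GRing.Theory Num.Theory.
Import numFieldNormedType.Exports.
Local Open Scope ring_scope.

Section Defs.
Variables (R : realType) (n m : nat).

Definition is_distr (mu : 'rV[R]_n) : Prop :=
  (forall i, 0 <= mu 0 i) /\ \sum_i mu 0 i = 1.

Definition expect (mu V : 'rV[R]_n) : R := \sum_i mu 0 i * V 0 i.

Definition convex_risk_measure (sig : 'rV[R]_n -> R) : Prop :=
  [/\ (forall V V' : 'rV[R]_n, (forall i, V' 0 i <= V 0 i) -> sig V <= sig V'),
      (forall (V : 'rV[R]_n) (c : R), sig (V + const_mx c) = sig V - c) &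
      (forall (V V' : 'rV[R]_n) (l : R), 0 <= l <= 1 ->
          sig (l *: V + (1 - l) *: V') <= l * sig V + (1 - l) * sig V')].

Definition penalty (sig : 'rV[R]_n -> R) (mu : 'rV[R]_n) : \bar R :=
  ereal_sup (range (fun V : 'rV[R]_n => (- sig V - expect mu V)%:E)).

Definition is_worst_case (sig : 'rV[R]_n -> R) (V mu : 'rV[R]_n) : Prop :=
  is_distr mu /\
  forall mu' : 'rV[R]_n, is_distr mu' ->
    (penalty sig mu + (expect mu V)%:E <= penalty sig mu' + (expect mu' V)%:E)%E.

Definition robust_bellman (r : 'I_n -> 'I_m -> R) (gamma : R)
    (sigma : 'I_n -> 'I_m -> 'rV[R]_n -> R) (theta : 'M[R]_(n, m))
    (V : 'rV[R]_n) : Prop :=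
  forall s, V 0 s = \sum_a theta s a * (r s a - gamma * sigma s a V).

(* V^{pi_theta}: the unique solution of the robust Bellman equation
   (default 0 if there is no unique solution). *)
Definition robust_value r gamma sigma (theta : 'M[R]_(n, m)) : 'rV[R]_n :=
  xget 0 [set V | robust_bellman r gamma sigma theta V /\
                  forall W, robust_bellman r gamma sigma theta W -> W = V].

Definition robust_Q r gamma sigma (theta : 'M[R]_(n, m)) (s : 'I_n) (a : 'I_m) : R :=
  r s a - gamma * sigma s a (robust_value r gamma sigma theta).

Definition robust_objective r gamma sigma (rho : 'rV[R]_n) (theta : 'M[R]_(n, m)) : R :=
  expect rho (robust_value r gamma sigma theta).

(* one step of the state chain: s_t ~ mu, a_t ~ pi(.|s_t), s_{t+1} ~ K_{s_t,a_t} *)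
Definition chain_step (pi : 'M[R]_(n, m)) (K : 'I_n -> 'I_m -> 'rV[R]_n)
    (mu : 'rV[R]_n) : 'rV[R]_n :=
  \row_j \sum_i \sum_a mu 0 i * pi i a * K i a 0 j.

Definition state_law pi K (rho : 'rV[R]_n) (t : nat) : 'rV[R]_n :=
  iter t (chain_step pi K) rho.

Definition visitation (gamma : R) pi K rho (s : 'I_n) : R :=
  (1 - gamma) * limn (fun N => \sum_(0 <= t < N) gamma ^+ t * state_law pi K rho t 0 s).

End Defs.

(* Main.v *)
Require Import Defs.
From HB Require Import structures.
From mathcomp Require Import all_boot all_order all_algebra.
From mathcomp Require Import all_classical all_reals all_analysis.
From mathcomp Require Import lra ring.
Import Order.TTheory GRing.Theory Num.Theory.
Import numFieldNormedType.Exports.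
Local Open Scope classical_set_scope.
Local Open Scope ring_scope.
Set Implicit Arguments. Unset Strict Implicit. Unset Printing Implicit Defensive.

Local Notation "''d' f x" := (@diff _ _ _ _ (Phantom _ (nbhs x)) f).
Lemma frechet (R : realType) n (f : 'rV[R]_n -> R) V : differentiable f V ->
  forall e, 0 < e -> \forall k \near (0:'rV[R]_n), `|f (V + k) - f V - 'd f V k| <= e * `|k|.
Proof.
move=> df e e0.
have /diff_locallyP [_ H] := df.
move/eqaddoP: H => /(_ e e0).
apply: filterS => k /=.
by rewrite !fctE /= [k + V]addrC opprD addrA.
Qed.
Lemma nrm1 (R : realType) n (V : 'rV[R]_n) i : `|V 0 i| <= `|V|.
Proof.
have -> : `|V| = mx_norm V by [].
rewrite mx_normrE; exact: (le_bigmax _ (fun ij : 'I_1 * 'I_n => `|V ij.1 ij.2|) (0, i)).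
Qed.
Lemma nrm2 (R : realType) n (V : 'rV[R]_n) c : 0 <= c -> (forall i, `|V 0 i| <= c) -> `|V| <= c.
Proof.
move=> c0 H; have -> : `|V| = mx_norm V by [].
rewrite mx_normrE; apply: bigmax_le => // -[i j] _ /=.
by rewrite (ord1 i).
Qed.
Definition rVc (R : realType) n := 'rV[R]_n.
HB.instance Definition _ (R : realType) n := NormedModule.copy (rVc R n) 'rV[R]_n.
HB.instance Definition _ (R : realType) n := Complete.copy (rVc R n) 'rV[R]_n.

Lemma fixpt (R : realType) n (F : 'rV[R]_n -> 'rV[R]_n) (q : R) : 0 <= q -> q < 1 ->
  (forall V W, `|F V - F W| <= q * `|V - W|) ->
  exists V, V = F V /\ forall W, W = F W -> W = V.
Proof.
move=> q0 q1 HF.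
pose G : {fun [set: rVc R n] >-> [set: rVc R n]} := totalfun_ setT F.
have ctr : is_contraction G.
  exists (NngNum q0); split => //= -[x y] _; exact: HF.
have [V _ HV] := banach_fixed_point ctr (@closedT _) (ex_intro _ 0 I).
exists V; split => // W HW.
exact: (contraction_fixpoint_unique ctr I I HW HV).
Qed.
Lemma sig_lip (R : realType) n (f : 'rV[R]_n -> R) V W :
  convex_risk_measure f -> `|f V - f W| <= `|V - W|.
Proof.
case=> mono trans _.
set c := `|V - W|.
have hc i : `|V 0 i - W 0 i| <= c by move: (nrm1 (V - W) i); rewrite !mxE => h; exact h.
have h1 : f W <= f V + c.
  rewrite -[c]opprK -trans; apply: mono => i; rewrite !mxE.
  by move: (hc i); rewrite ler_norml => /andP[? ?]; lra.
have h2 : f V <= f W + c.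
  rewrite -[c]opprK -trans; apply: mono => i; rewrite !mxE.
  by move: (hc i); rewrite ler_norml => /andP[? ?]; lra.
by rewrite ler_norml; apply/andP; split; lra.
Qed.

Definition Top (R : realType) n m (r : 'I_n -> 'I_m -> R) gamma
   (sigma : 'I_n -> 'I_m -> 'rV[R]_n -> R) (th : 'M[R]_(n,m)) (V : 'rV[R]_n) : 'rV[R]_n :=
  \row_s \sum_a th s a * (r s a - gamma * sigma s a V).

Lemma bellmanE (R : realType) n m (r : 'I_n -> 'I_m -> R) gamma sigma th V :
  robust_bellman r gamma sigma th V <-> V = Top r gamma sigma th V.
Proof.
split => [H|H s]; first by apply/rowP => s; rewrite mxE H.
by rewrite {1}H mxE.
Qed.

Lemma Top_lip (R : realType) n m (r : 'I_n -> 'I_m -> R) (gamma : R) sigma (th : 'M[R]_(n,m)) (k : R) (V W : 'rV[R]_n) :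
  0 <= gamma -> (forall s a, convex_risk_measure (sigma s a)) -> 0 <= k ->
  (forall s, \sum_a `|th s a| <= k) ->
  `|Top r gamma sigma th V - Top r gamma sigma th W| <= gamma * k * `|V - W|.
Proof.
move=> g0 crm k0 hk; apply: nrm2 => [|s].
  by rewrite !mulr_ge0.
rewrite !mxE -sumrB.
apply: le_trans (ler_norm_sum _ _ _) _.
apply: le_trans (_ : \sum_a `|th s a| * (gamma * `|V - W|) <= _).
  apply: ler_sum => a _.
  rewrite -mulrBr normrM ler_wpM2l //.
  have -> : r s a - gamma * sigma s a V - (r s a - gamma * sigma s a W)
     = gamma * (sigma s a W - sigma s a V) by ring.
  rewrite normrM ger0_norm // ler_wpM2l // distrC.
  exact: sig_lip.
rewrite -mulr_suml [gamma * k]mulrC -mulrA ler_wpM2r //.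
by rewrite mulr_ge0.
Qed.

Lemma rv_spec (R : realType) n m (r : 'I_n -> 'I_m -> R) (gamma : R) sigma
   (th : 'M[R]_(n,m)) (k : R) :
  0 <= gamma -> (forall s a, convex_risk_measure (sigma s a)) -> 0 <= k ->
  gamma * k < 1 -> (forall s, \sum_a `|th s a| <= k) ->
  robust_bellman r gamma sigma th (robust_value r gamma sigma th) /\
  forall W, robust_bellman r gamma sigma th W -> W = robust_value r gamma sigma th.
Proof.
move=> g0 crm k0 gk hk.
have [V [HV Hu]] := fixpt (mulr_ge0 g0 k0) gk (fun V W => Top_lip r V W g0 crm k0 hk).
have ex : exists V, (robust_bellman r gamma sigma th V /\
   forall W, robust_bellman r gamma sigma th W -> W = V).
  exists V; split; first by apply/bellmanE.
  by move=> W /bellmanE; apply: Hu.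
exact: (xgetPex 0 ex).
Qed.

Local Notation "''d' f x" := (@diff _ _ _ _ (Phantom _ (nbhs x)) f).

Lemma G0 (R : realType) n (f : 'rV[R]_n -> R) V h e : differentiable f V -> 0 < e ->
  exists l : R, [/\ 0 < l, l <= 1 &
    `|f (V + l *: h) - f V - l * 'd f V h| <= l * e].
Proof.
move=> df e0.
have e'0 : 0 < e / (`|h| + 1) by rewrite divr_gt0 // ltr_wpDl.
have /nbhs_norm0P [d /= d0 Hd] := frechet df e'0.
set l := Num.min 1 (d / (2 * (`|h| + 1))).
have h1 : 0 < `|h| + 1 by rewrite ltr_wpDl.
have l0 : 0 < l by rewrite lt_min ltr01 /= divr_gt0 // mulr_gt0.
have l1 : l <= 1 by rewrite ge_min lexx.
have l2 : l * (`|h| + 1) <= d / 2.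
  have : l <= d / (2 * (`|h| + 1)) by rewrite ge_min lexx orbT.
  rewrite ler_pdivlMr ?mulr_gt0 // => H.
  by rewrite ler_pdivlMr // -mulrA [(_ + 1) * 2]mulrC.
exists l; split => //.
have nlh : `|l *: h| = l * `|h| by rewrite normrZ ger0_norm // ltW.
have hh : 0 <= `|h| := normr_ge0 h.
have lge0 := ltW l0.
have Hlt : `|l *: h| < d by rewrite nlh; nra.
have := Hd _ Hlt; rewrite nlh linearZ /= => H.
apply: le_trans H _.
have q1 : `|h| / (`|h| + 1) <= 1 by rewrite ler_pdivrMr // mul1r lerDl.
have q0 : 0 <= `|h| / (`|h| + 1) by rewrite divr_ge0 // ltW.
have -> : e / (`|h| + 1) * (l * `|h|) = l * e * (`|h| / (`|h| + 1)) by rewrite mulrA; ring.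
by rewrite ler_piMr // mulr_ge0 // ltW.
Qed.

Lemma G1 (R : realType) n (f : 'rV[R]_n -> R) V h c : differentiable f V ->
  (forall l, 0 < l -> l <= 1 -> f (V + l *: h) - f V <= l * c) -> 'd f V h <= c.
Proof.
move=> df H; apply/ler_addgt0Pr => e e0.
have [l [l0 l1 Hl]] := G0 h df e0.
have := H l l0 l1; move: Hl; rewrite ler_norml => /andP[Ha Hb] Hc.
rewrite -(ler_pM2l l0); nra.
Qed.

Lemma G2 (R : realType) n (f : 'rV[R]_n -> R) V h c : differentiable f V ->
  (forall l, 0 < l -> l <= 1 -> l * c <= f (V + l *: h) - f V) -> c <= 'd f V h.
Proof.
move=> df H; rewrite -lerN2; apply/ler_addgt0Pr => e e0.
have [l [l0 l1 Hl]] := G0 h df e0.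
have := H l l0 l1; move: Hl; rewrite ler_norml => /andP[Ha Hb] Hc.
rewrite -(ler_pM2l l0); nra.
Qed.

Lemma expectD (R : realType) n (mu V W : 'rV[R]_n) :
  expect mu (V + W) = expect mu V + expect mu W.
Proof. by rewrite /expect -big_split; apply: eq_bigr => i _; rewrite mxE mulrDr. Qed.

Lemma expectZ (R : realType) n (mu V : 'rV[R]_n) c :
  expect mu (c *: V) = c * expect mu V.
Proof. by rewrite /expect mulr_sumr; apply: eq_bigr => i _; rewrite mxE; ring. Qed.

Lemma expectN (R : realType) n (mu V : 'rV[R]_n) :
  expect mu (- V) = - expect mu V.
Proof. by rewrite -scaleN1r expectZ mulN1r. Qed.

Lemma dsum (R : realType) n (f : 'rV[R]_n -> R) V h :
  'd f V h = \sum_j h 0 j * 'd f V (delta_mx 0 j).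
Proof.
rewrite {1}(row_sum_delta h) linear_sum; apply: eq_bigr => j _.
by rewrite linearZ.
Qed.

Lemma grad (R : realType) n (f : 'rV[R]_n -> R) V mu :
  convex_risk_measure f -> differentiable f V -> is_worst_case f V mu ->
  forall h, 'd f V h = - expect mu h.
Proof.
move=> crm df [_ wc].
have [mono trans conv] := crm.
pose g : 'rV[R]_n := \row_j - 'd f V (delta_mx 0 j).
have Eg h : expect g h = - 'd f V h.
  rewrite dsum /expect -sumrN; apply: eq_bigr => j _; rewrite mxE; ring.
have gdist : is_distr g.
  split.
    move=> j; rewrite mxE oppr_ge0; apply: G1 => // l l0 l1.
    rewrite mulr0 subr_le0; apply: mono => i.
    by rewrite !mxE lerDl mulr_ge0 // ltW.
  have -> : \sum_i g 0 i = expect g (const_mx 1).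
    by rewrite /expect; apply: eq_bigr => i _; rewrite !mxE mulr1.
  rewrite Eg; apply/eqP; rewrite eqr_oppLR eq_le; apply/andP; split.
    apply: G1 => // l l0 l1.
    by rewrite scalemx_const mulr1 trans; lra.
  apply: G2 => // l l0 l1.
  by rewrite scalemx_const mulr1 trans; lra.
have gi W : f V + 'd f V (W - V) <= f W.
  rewrite -lerBrDl; apply: G1 => // l l0 l1.
  have -> : V + l *: (W - V) = l *: W + (1 - l) *: V.
    by apply/rowP => i; rewrite !mxE; ring.
  have := conv W V l; rewrite (ltW l0) l1 => /(_ isT); lra.
have pg : (penalty f g + (expect g V)%:E <= (- f V)%:E)%E.
  have : (penalty f g <= (- f V - expect g V)%:E)%E.
    apply: ge_ereal_sup => _ [W _ <-].
    rewrite lee_fin !Eg; have := gi W; rewrite linearB /=; lra.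
  by move/(leeD2r (expect g V)%:E); rewrite -EFinD subrK.
have pm W : - f W - expect mu W + expect mu V <= - f V.
  have h1 : ((- f W - expect mu W)%:E <= penalty f mu)%E.
    by apply: ereal_sup_ubound; exists W.
  have := le_trans (leeD2r (expect mu V)%:E h1) (le_trans (wc g gdist) pg).
  by rewrite -EFinD lee_fin.
have low h : - expect mu h <= 'd f V h.
  apply: G2 => // l l0 l1.
  have := pm (V + l *: h); rewrite expectD expectZ; lra.
move=> h; apply/eqP; rewrite eq_le low andbT.
have := low (- h); rewrite linearN expectN /=; lra.
Qed.

Lemma cvg_bigsum (R : realType) (I : finType) (f : I -> nat -> R) (l : I -> R) :
  (forall i, f i @ \oo --> l i) -> (fun N => \sum_i f i N) @ \oo --> \sum_i l i.
Proof.
move=> H.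
suff : forall s : seq I, (fun N => \sum_(i <- s) f i N) @ \oo --> \sum_(i <- s) l i by apply.
elim => [|i s IH].
  rewrite big_nil (_ : (fun N => _) = cst 0); first exact: cvg_cst.
  by apply/funext => N; rewrite big_nil.
rewrite big_cons (_ : (fun N => _) = (fun N => f i N + \sum_(j <- s) f j N)).
  exact: cvgD.
by apply/funext => N; rewrite big_cons.
Qed.

Lemma law_step (R : realType) n m (th : 'M[R]_(n,m)) (K : 'I_n -> 'I_m -> 'rV[R]_n)
  (rho : 'rV[R]_n) t j :
  state_law th K rho t.+1 0 j =
  \sum_i state_law th K rho t 0 i * (\sum_a th i a * K i a 0 j).
Proof.
rewrite /state_law iterS /chain_step mxE; apply: eq_bigr => i _.
by rewrite mulr_sumr; apply: eq_bigr => a _; rewrite !mulrA.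
Qed.

Lemma law_distr (R : realType) n m (th : 'M[R]_(n,m)) (K : 'I_n -> 'I_m -> 'rV[R]_n)
  (rho : 'rV[R]_n) :
  is_distr rho -> (forall s a, 0 <= th s a) -> (forall s, \sum_a th s a = 1) ->
  (forall s a, is_distr (K s a)) -> forall t, is_distr (state_law th K rho t).
Proof.
move=> [r0 r1] th0 th1 Kd; elim => [|t [IH0 IH1]]; first by split.
split => [j|].
  rewrite law_step; apply: sumr_ge0 => i _; apply: mulr_ge0 => //.
  by apply: sumr_ge0 => a _; apply: mulr_ge0 => //; case: (Kd i a).
under eq_bigr do rewrite law_step.
rewrite exchange_big /= -IH1; apply: eq_bigr => i _.
rewrite -mulr_sumr exchange_big /=.
rewrite (eq_bigr (fun a => th i a)) ?th1 ?mulr1 // => a _.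
by rewrite -mulr_sumr; case: (Kd i a) => _ ->; rewrite mulr1.
Qed.

Lemma geom_le (R : realType) (gamma : R) N : 0 <= gamma -> gamma < 1 ->
  \sum_(0 <= t < N) gamma ^+ t <= (1 - gamma)^-1.
Proof.
move=> g0 g1.
have H : (1 - gamma) * \sum_(0 <= t < N) gamma ^+ t = 1 - gamma ^+ N.
  elim: N => [|N IH]; first by rewrite big_geq // mulr0 expr0 subrr.
  by rewrite big_nat_recr //= mulrDr IH exprS; ring.
rewrite -(ler_pM2l (_ : 0 < 1 - gamma)) ?subr_gt0 // H mulfV ?subr_eq0 ?gt_eqF //.
by rewrite lerBlDr lerDl exprn_ge0.
Qed.

Lemma occ (R : realType) n m (th : 'M[R]_(n,m)) (K : 'I_n -> 'I_m -> 'rV[R]_n)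
  (rho : 'rV[R]_n) (gamma : R) :
  0 <= gamma -> gamma < 1 -> is_distr rho -> (forall s a, 0 <= th s a) ->
  (forall s, \sum_a th s a = 1) -> (forall s a, is_distr (K s a)) ->
  exists u : 'rV[R]_n,
    (forall j, limn (fun N => \sum_(0 <= t < N) gamma ^+ t * state_law th K rho t 0 j)
               = u 0 j) /\
    (forall j, u 0 j = rho 0 j + gamma * \sum_i u 0 i * (\sum_a th i a * K i a 0 j)).
Proof.
move=> g0 g1 rd th0 th1 Kd.
have ld := law_distr rd th0 th1 Kd.
pose S j N := \sum_(0 <= t < N) gamma ^+ t * state_law th K rho t 0 j.
have law_le1 t j : state_law th K rho t 0 j <= 1.
  have [h0 h1] := ld t; rewrite -h1 (bigD1 j) //= lerDl.
  by apply: sumr_ge0 => i _.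
have Scvg j : cvgn (S j).
  apply/cvg_ex; eexists; apply: nondecreasing_cvgn.
    apply/nondecreasing_seqP => N; rewrite /S big_nat_recr //= lerDl.
    by apply: mulr_ge0; [exact: exprn_ge0|case: (ld N)].
  exists (1 - gamma)^-1 => _ [N _ <-].
  apply: le_trans (geom_le N g0 g1); apply: ler_sum => t _.
  by rewrite ler_piMr ?exprn_ge0 //.
exists (\row_j limn (S j)); split => j; rewrite mxE //.
have Hrec N : S j N.+1 = rho 0 j + gamma * \sum_i S i N * (\sum_a th i a * K i a 0 j).
  rewrite /S big_nat_recl //= expr0 mul1r; congr (_ + _).
  under eq_bigr do rewrite law_step.
  rewrite big_distrr /=.
  under [X in _ = X]eq_bigr do rewrite big_distrl big_distrr /=.
  rewrite [X in _ = X]exchange_big /=; apply: eq_bigr => t _.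
  rewrite big_distrr; apply: eq_bigr => i _; by rewrite exprS /= !mulrA.
have c1 : S j N.+1 @[N --> \oo] --> limn (S j).
  by rewrite cvg_shiftS; exact: Scvg.
have c2 : S j N.+1 @[N --> \oo] -->
    rho 0 j + gamma * \sum_i limn (S i) * (\sum_a th i a * K i a 0 j).
  have -> : (fun N => S j N.+1) = (fun N => rho 0 j + gamma * \sum_i S i N * (\sum_a th i a * K i a 0 j)).
    by apply/funext => k; rewrite Hrec.
  apply: cvgD; first exact: cvg_cst.
  apply: cvgMr; apply: cvg_bigsum => i; apply: cvgMl; exact: Scvg.
have E : limn (S j) = _ := cvg_unique (@norm_hausdorff _ _) c1 c2.
rewrite E.
by under [in RHS]eq_bigr do rewrite mxE.
Qed.

Lemma delta_sum (R : realType) n m (s s' : 'I_n) (a : 'I_m) (X : 'I_m -> R) :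
  \sum_a' (delta_mx s a : 'M[R]_(n,m)) s' a' * X a' = (s' == s)%:R * X a.
Proof.
rewrite (bigD1 a) //= big1 ?addr0 => [|a' /negbTE na]; rewrite mxE ?eqxx ?andbT //.
by rewrite na andbF mul0r.
Qed.

Lemma cvx_bound (R : realType) m (w y : 'I_m -> R) B :
  (forall a, 0 <= w a) -> \sum_a w a = 1 -> (forall a, `|y a| <= B) ->
  `|\sum_a w a * y a| <= B.
Proof.
move=> w0 w1 hy; apply: le_trans (ler_norm_sum _ _ _) _.
apply: le_trans (_ : \sum_a w a * B <= _).
  by apply: ler_sum => a _; rewrite normrM ger0_norm // ler_wpM2l.
by rewrite -mulr_suml w1 mul1r.
Qed.

Lemma wsum_bound (R : realType) n (u y : 'I_n -> R) B : 0 <= B ->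
  (forall i, `|y i| <= B) -> `|\sum_i u i * y i| <= (\sum_i `|u i|) * B.
Proof.
move=> B0 hy; apply: le_trans (ler_norm_sum _ _ _) _.
rewrite mulr_suml; apply: ler_sum => i _; rewrite normrM ler_wpM2l //.
Qed.

Lemma occ_dot (R : realType) n (u rho D : 'rV[R]_n) (M : 'I_n -> 'I_n -> R) gamma :
  (forall j, u 0 j = rho 0 j + gamma * \sum_i u 0 i * M i j) ->
  \sum_j rho 0 j * D 0 j = \sum_i u 0 i * (D 0 i - gamma * \sum_j M i j * D 0 j).
Proof.
move=> Hu.
have -> : \sum_j rho 0 j * D 0 j =
  \sum_j u 0 j * D 0 j - \sum_j gamma * (\sum_i u 0 i * M i j) * D 0 j.
  by rewrite -sumrB; apply: eq_bigr => j _; rewrite Hu; ring.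
rewrite [X in _ - X](eq_bigr (fun j => \sum_i gamma * (u 0 i * M i j * D 0 j))); last first.
  by move=> j _; rewrite mulr_sumr mulr_suml; apply: eq_bigr => i _; ring.
rewrite exchange_big /= -sumrB; apply: eq_bigr => i _.
rewrite mulrBr mulr_sumr mulr_sumr; congr (_ - _); apply: eq_bigr => j _; ring.
Qed.

Lemma near0' (R : realType) (P : R -> Prop) (d : R) : 0 < d ->
  (forall t, t != 0 -> `|t| < d -> P t) -> \forall t \near 0^', P t.
Proof.
move=> d0 H; rewrite /dnbhs near_withinE.
have : \forall t \near (0:R), t != 0 -> P t.
  apply/nbhs_norm0P; exists d => // t /= ht tn0; exact: H.
by [].
Qed.

Lemma deriv_of_cvg (R : realType) (F : R -> R) l :
  (fun h => h^-1 * (F h - F 0)) @ 0^' --> l -> is_derive (0 : R) (1 : R) F l.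
Proof.
move=> H.
have E : (fun h : R => h^-1 *: ((F \o shift 0) (h *: 1) - F 0)) = (fun h => h^-1 * (F h - F 0)).
  by apply/funext => h /=; rewrite addr0 [h *: 1]mulr1.
split; first by rewrite /derivable E; apply/cvg_ex; exists l.
by rewrite /derive E; apply: cvg_lim.
Qed.

Lemma th_sum (R : realType) n m (theta : 'M[R]_(n,m)) (s s' : 'I_n) (a : 'I_m) t (X : 'I_m -> R) :
  \sum_a' (theta + t *: delta_mx s a) s' a' * X a' =
  \sum_a' theta s' a' * X a' + t * ((s' == s)%:R * X a).
Proof.
rewrite -delta_sum mulr_sumr -big_split /=; apply: eq_bigr => a' _.
by rewrite !mxE; ring.
Qed.

Lemma main_gen (R : realType) n m (sg : 'I_n -> 'I_m -> 'rV[R]_n -> R)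
  (r : 'I_n -> 'I_m -> R) (gamma : R) (rho : 'rV[R]_n) (theta : 'M[R]_(n,m))
  (Phat : 'I_n -> 'I_m -> 'rV[R]_n) :
  0 <= gamma -> gamma < 1 -> is_distr rho ->
  (forall s a, convex_risk_measure (sg s a)) ->
  (forall s a V, differentiable (sg s a) V) ->
  (forall s a, 0 <= theta s a) -> (forall s, \sum_a theta s a = 1) ->
  (forall s a, is_worst_case (sg s a) (robust_value r gamma sg theta) (Phat s a)) ->
  forall s a, is_derive (0:R) (1:R)
     (fun t : R => robust_objective r gamma sg rho (theta + t *: delta_mx s a))
     ((1 - gamma)^-1 * visitation gamma theta Phat rho s * robust_Q r gamma sg theta s a).
Proof.
move=> g0 g1 rd crm dif th0 th1 wc s a.
set V0 := robust_value r gamma sg theta.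
pose Vt t := robust_value r gamma sg (theta + t *: delta_mx s a).
pose d0 := (1 - gamma) / 2.
have d0p : 0 < d0 by rewrite divr_gt0 // subr_gt0.
have spec0 : robust_bellman r gamma sg theta V0.
  have [] // := @rv_spec R n m r gamma sg theta 1 g0 crm ler01; first by rewrite mulr1.
  move=> s'; rewrite (eq_bigr (fun a => theta s' a)) ?th1 // => a' _.
  by rewrite ger0_norm.
have spec t : `|t| <= d0 -> robust_bellman r gamma sg (theta + t *: delta_mx s a) (Vt t).
  move=> ht.
  have t0 : 0 <= `|t| := normr_ge0 t.
  have [] // := @rv_spec R n m r gamma sg (theta + t *: delta_mx s a) (1 + `|t|) g0 crm.
  - rewrite /d0 in ht; nra.
  move=> s'.
  apply: le_trans (_ : \sum_a' (theta s' a' + `|t| * (delta_mx s a : 'M[R]_(n,m)) s' a') <= _).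
    apply: ler_sum => a' _; rewrite !mxE; apply: le_trans (ler_normD _ _) _.
    by rewrite ger0_norm // normrM [`|_%:R|]ger0_norm.
  rewrite big_split /= th1 lerD2l -mulr_sumr.
  have := delta_sum s s' a (fun _ => 1 : R); rewrite (eq_bigr (fun a' => (delta_mx s a : 'M[R]_(n,m)) s' a')) => [->|a' _]; last by rewrite mulr1.
  by rewrite mulr1 ler_piMr //; case: (s' == s).
set Q := robust_Q r gamma sg theta s a.
have key t : `|t| <= d0 -> forall s', (Vt t - V0) 0 s' =
    \sum_a' theta s' a' * (gamma * (sg s' a' V0 - sg s' a' (Vt t))) +
    t * ((s' == s)%:R * (Q + gamma * (sg s a V0 - sg s a (Vt t)))).
  move=> ht s'; rewrite !mxE (spec t ht s') (spec0 s') th_sum.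
  have E : \sum_a' theta s' a' * (r s' a' - gamma * sg s' a' (Vt t)) -
     \sum_a' theta s' a' * (r s' a' - gamma * sg s' a' V0) =
     \sum_a' theta s' a' * (gamma * (sg s' a' V0 - sg s' a' (Vt t))).
    by rewrite -sumrB; apply: eq_bigr => a' _; ring.
  rewrite -E /Q /robust_Q -/V0; case: (s' =P s) => [->|_]; [ring | rewrite !mul0r; ring].
pose C := 2 * `|Q| / (1 - gamma).
have C0 : 0 <= C by rewrite /C divr_ge0 ?mulr_ge0 // subr_ge0 ltW.
have hD t : `|t| <= d0 -> `|Vt t - V0| <= C * `|t|.
  move=> ht; set x := `|Vt t - V0|.
  have x0 : 0 <= x := normr_ge0 _.
  have t0 : 0 <= `|t| := normr_ge0 t.
  have hs : forall s', `|(Vt t - V0) 0 s'| <= gamma * x + `|t| * (`|Q| + gamma * x).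
    move=> s'; rewrite key //; apply: le_trans (ler_normD _ _) _.
    apply: lerD.
      apply: cvx_bound => // a'; rewrite normrM ger0_norm // ler_wpM2l //.
      by rewrite distrC sig_lip.
    rewrite normrM ler_wpM2l // normrM.
    apply: le_trans (_ : 1 * (`|Q| + gamma * x) <= _); last by rewrite mul1r.
    apply: ler_pM => //; first by case: (s' == s); rewrite ?normr1 ?normr0.
    apply: le_trans (ler_normD _ _) _; rewrite lerD2l normrM ger0_norm // ler_wpM2l //.
    by rewrite distrC sig_lip.
  have hx : x <= gamma * x + `|t| * (`|Q| + gamma * x).
    apply: nrm2 hs.
    have h1 := mulr_ge0 g0 x0; have h2 := mulr_ge0 t0 (addr_ge0 (normr_ge0 Q) h1); lra.
  rewrite /C mulrAC ler_pdivlMr ?subr_gt0 //.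
  rewrite /d0 in ht.
  have h1 : 0 <= (1 - gamma) * `|t| * x by rewrite !mulr_ge0 // subr_ge0 ltW.
  have h2 : 0 <= ((1 - gamma) / 2 - `|t|) * x by rewrite mulr_ge0 // subr_ge0.
  nra.
have fr e : 0 < e -> \forall k \near (0 : 'rV[R]_n), forall p : 'I_n * 'I_m,
    `|sg p.1 p.2 (V0 + k) - sg p.1 p.2 V0 + expect (Phat p.1 p.2) k| <= e * `|k|.
  move=> e0.
  have H : forall p : 'I_n * 'I_m, \forall k \near (0 : 'rV[R]_n),
    `|sg p.1 p.2 (V0 + k) - sg p.1 p.2 V0 + expect (Phat p.1 p.2) k| <= e * `|k|.
    move=> [s' a'] /=.
    have := frechet (dif s' a' V0) e0; apply: filterS => k.
    by rewrite (grad (crm s' a') (dif s' a' V0) (wc s' a')) opprK.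
  exact: (@filter_forall _ _ (fun p k => `|sg p.1 p.2 (V0 + k) - sg p.1 p.2 V0 + expect (Phat p.1 p.2) k| <= e * `|k|) _ _ H).
have [u [hu1 hu2]] := occ g0 g1 rd th0 th1 (fun s a => (wc s a).1).
have -> : (1 - gamma)^-1 * visitation gamma theta Phat rho s * Q = u 0 s * Q.
  rewrite /visitation hu1 mulrA mulVf ?mul1r // subr_eq0 gt_eqF //.
apply: deriv_of_cvg.
have EF : (fun h => h^-1 * (robust_objective r gamma sg rho (theta + h *: delta_mx s a)
     - robust_objective r gamma sg rho (theta + 0 *: delta_mx s a))) =
    (fun h => h^-1 * expect rho (Vt h - V0)).
  by apply/funext => h; rewrite /robust_objective scale0r addr0 expectD expectN.
rewrite EF.
apply/cvgrPdist_le => eps eps0.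
pose U := \sum_i `|u 0 i|.
have U0 : 0 <= U by apply: sumr_ge0 => i _.
have us : `|u 0 s| <= U.
  by rewrite /U (bigD1 s) //= lerDl sumr_ge0.
pose K := U * C + 1.
have K0 : 0 < K by rewrite /K ltr_wpDl // mulr_ge0.
pose e1 := eps / (2 * K).
have e10 : 0 < e1 by rewrite /e1 divr_gt0 // mulr_gt0.
have [dE dE0 HdE] := nbhs_norm0P.1 (fr e1 e10).
have C10 : 0 < C + 1 by rewrite ltr_wpDl.
apply: (@near0' _ _ (Num.min d0 (Num.min (dE / (C + 1)) e1))).
  by rewrite !lt_min d0p divr_gt0.
move=> t tn0; rewrite !lt_min => /and3P[htd htE hte].
have ht : `|t| <= d0 := ltW htd.
have t0 : 0 < `|t| by rewrite normr_gt0.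
set D := Vt t - V0.
have hd : `|D| <= C * `|t| := hD t ht.
have Dsmall : `|D| < dE.
  apply: le_lt_trans hd _; rewrite ltr_pdivlMr // in htE.
  by apply: le_lt_trans htE; rewrite mulrC ler_wpM2l // lerDl.
pose err i a' := sg i a' (Vt t) - sg i a' V0 + expect (Phat i a') D.
have herr i a' : `|err i a'| <= e1 * `|D|.
  have := HdE D Dsmall (i, a'); rewrite /= /D [V0 + _]addrC subrK; exact.
pose A := \sum_i u 0 i * \sum_a' theta i a' * err i a'.
pose Dl := sg s a V0 - sg s a (Vt t).
have ident : expect rho D = - gamma * A + t * (u 0 s * (Q + gamma * Dl)).
  rewrite /expect (occ_dot D hu2).
  have per i : D 0 i - gamma * \sum_j (\sum_a' theta i a' * Phat i a' 0 j) * D 0 j =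
      - gamma * (\sum_a' theta i a' * err i a') + t * ((i == s)%:R * (Q + gamma * Dl)).
    have EM : \sum_j (\sum_a' theta i a' * Phat i a' 0 j) * D 0 j =
        \sum_a' theta i a' * expect (Phat i a') D.
      under eq_bigr do rewrite mulr_suml.
      rewrite exchange_big /=; apply: eq_bigr => a' _.
      by rewrite /expect mulr_sumr; apply: eq_bigr => j _; ring.
    rewrite EM /D (key t ht i) -/D -/Dl.
    have ES : \sum_a' theta i a' * (gamma * (sg i a' V0 - sg i a' (Vt t))) -
        gamma * \sum_a' theta i a' * expect (Phat i a') D =
        - gamma * (\sum_a' theta i a' * err i a').
      rewrite !mulr_sumr -sumrB; apply: eq_bigr => a' _; rewrite /err; ring.
    rewrite -ES; ring.
  under eq_bigr do rewrite per.
  have -> : \sum_i u 0 i * (- gamma * (\sum_a' theta i a' * err i a') +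
      t * ((i == s)%:R * (Q + gamma * Dl))) =
      - gamma * A + t * \sum_i (i == s)%:R * (u 0 i * (Q + gamma * Dl)).
    rewrite /A !mulr_sumr -big_split /=; apply: eq_bigr => i _; ring.
  congr (_ + _ * _).
  rewrite (bigD1 s) //= eqxx mul1r big1 ?addr0 // => i /negbTE ->; by rewrite mul0r.
have x0 : 0 <= `|D| := normr_ge0 D.
have hDl : `|Dl| <= `|D| by rewrite /Dl /D distrC sig_lip.
have hA : `|A| <= U * (e1 * `|D|).
  apply: wsum_bound; first by rewrite mulr_ge0 // ltW.
  move=> i; apply: cvx_bound => // a'; exact: herr.
rewrite ident.
have -> : u 0 s * Q - t^-1 * (- gamma * A + t * (u 0 s * (Q + gamma * Dl))) =
    t^-1 * (gamma * A) - gamma * (u 0 s * Dl).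
  by field.
have ge1 : gamma <= 1 by rewrite ltW.
have T1 : `|t^-1 * (gamma * A)| <= U * C * e1.
  rewrite normrM normfV normrM (ger0_norm g0).
  have H : gamma * `|A| <= (U * C * e1) * `|t|.
    have h1 : 0 <= U * e1 * (C * `|t| - `|D|).
      by apply: mulr_ge0; [apply: mulr_ge0 => //; exact: ltW | rewrite subr_ge0].
    have h2 : 0 <= (1 - gamma) * `|A| by rewrite mulr_ge0 ?subr_ge0.
    nra.
  rewrite mulrC ler_pdivrMr //.
have T2 : `|gamma * (u 0 s * Dl)| <= U * C * e1.
  rewrite !normrM (ger0_norm g0).
  have h1 : 0 <= `|u 0 s| * (`|D| - `|Dl|) by rewrite mulr_ge0 ?subr_ge0.
  have h2 : 0 <= (U - `|u 0 s|) * `|D| by rewrite mulr_ge0 ?subr_ge0.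
  have h3 : 0 <= U * (C * `|t| - `|D|) by rewrite mulr_ge0 ?subr_ge0.
  have h4 : 0 <= U * C * (e1 - `|t|).
    by apply: mulr_ge0; [exact: mulr_ge0 | rewrite subr_ge0 ltW].
  have h5 : 0 <= (1 - gamma) * (`|u 0 s| * `|Dl|).
    by apply: mulr_ge0; [rewrite subr_ge0 | exact: mulr_ge0].
  nra.
apply: le_trans (ler_normB _ _) _.
have hK : 2 * (U * C * e1) <= eps.
  have -> : eps = 2 * K * e1 by rewrite /e1 mulrC divfK // mulf_neq0 // gt_eqF.
  rewrite mulrA ler_wpM2r ?ltW //; rewrite /K; lra.
lra.
Qed.

Unset Implicit Arguments.

Theorem mainTheorem7 (R : realType) (n m : nat)
    (P : 'I_n -> 'I_m -> 'rV[R]_n)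
    (sig : 'rV[R]_n -> 'rV[R]_n -> R)
    (r : 'I_n -> 'I_m -> R) (gamma : R) (rho : 'rV[R]_n)
    (theta : 'M[R]_(n, m))
    (Phat : 'I_n -> 'I_m -> 'rV[R]_n) :
  (forall s a, is_distr (P s a)) ->
  (forall s a, 0 <= r s a <= 1) ->
  0 <= gamma < 1 ->
  is_distr rho ->
  (forall s a, convex_risk_measure (sig (P s a))) ->
  (forall s a (V : 'rV[R]_n), differentiable (sig (P s a)) V) ->
  (* theta is a stationary policy under direct parameterization *)
  (forall s a, 0 <= theta s a) -> (forall s, \sum_a theta s a = 1) ->
  (* Phat is a worst-case kernel for V^{pi_theta} *)
  (forall s a, is_worst_case (sig (P s a))
       (robust_value r gamma (fun s a => sig (P s a)) theta) (Phat s a)) ->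
  forall (s : 'I_n) (a : 'I_m),
    is_derive (0 : R) (1 : R)
      (fun t : R => robust_objective r gamma (fun s a => sig (P s a)) rho
                      (theta + t *: delta_mx s a))
      ((1 - gamma)^-1 * visitation gamma theta Phat rho s
         * robust_Q r gamma (fun s a => sig (P s a)) theta s a).
Proof.
move=> _ _ /andP[g0 g1] rd crm dif th0 th1 wc s a.
exact: (@main_gen R n m (fun s a => sig (P s a)) r gamma rho theta Phat g0 g1 rd crm dif th0 th1 wc s a).
Qed.
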